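(* Let $S$ be a semiring and $P$ a left $S$-semimodule. (1) For every left $S$-semimodule $M$, $P$ is $M$-$e$-projective if and only if $P$ is normally $M$-projective. (2) $P$ is $e$-projective if and only if $P$ is normally projective.
   Context: A semiring $(S,+,0,\cdot,1)$ consists of a commutative monoid $(S,+,0)$ and a monoid $(S,\cdot,1)$ with $0\neq 1$, absorbing zero and both distributive laws; left $S$-semimodules and $S$-linear maps are as for modules without subtraction; $\mathrm{Hom}_S(P,X)$ is a commutative monoid under pointwise addition. For an $S$-linear $h:X\to Y$, $\mathrm{Ker}(h)=\{x\mid h(x)=0\}$; $h$ is $k$-normal if $h(x)=h(x')$ implies $x+k=x'+k'$ for some $k,k'\in\mathrm{Ker}(h)$; a normal epimorphism is a surjective $k$-normal map. A short exact sequence $0\to L\xrightarrow{f}M\xrightarrow{g}N\to 0$ (of semimodules or of commutative monoids) means: $f$ injective, $f(L)=\mathrm{Ker}(g)$, $g$ surjective and $k$-normal. $P$ is $M$-$e$-projective if for every short exact sequence $0\to L\xrightarrow{f}M\xrightarrow{g}N\to0$ of left $S$-semimodules (with middle term $M$), the sequence $0\to\mathrm{Hom}_S(P,L)\xrightarrow{f\circ-}\mathrm{Hom}_S(P,M)\xrightarrow{g\circ-}\mathrm{Hom}_S(P,N)\to0$ is a short exact sequence of commutative monoids; $P$ is $e$-projective if it is $M$-$e$-projective for all $M$. $P$ is normally $M$-projective if for every normal epimorphism $f:M\to N$ and every $S$-linear $g:P\to N$ there is an $S$-linear $h:P\to M$ with $f\circ h=g$, and whenever $h':P\to M$ is $S$-linear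 with $f\circ h'=g$, there exist $S$-linear $h_1,h_2:P\to M$ with $f\circ h_1=0=f\circ h_2$ and $h+h_1=h'+h_2$; $P$ is normally projective if normally $M$-projective for all $M$. *)

(* Defs.v *)
From HB Require Import structures.
From mathcomp Require Import all_boot all_algebra.
Set Implicit Arguments. Unset Strict Implicit. Unset Printing Implicit Defensive.
Import GRing.Theory.
Local Open Scope ring_scope.

(* Elements of Hom_S(P,X) are compared
   extensionally (pointwise), and the monoid structure on Hom_S(P,X) is the
   pointwise one (zero map, pointwise sum). *)

Section Defs.
Variable S : nzSemiRingType.

Definition k_normal (X Y : lSemiModType S) (h : {linear X -> Y}) : Prop :=
  forall x x' : X, h x = h x' ->
    exists k k' : X, h k = 0 /\ h k' = 0 /\ x + k = x' + k'.

Definition normal_epi (X Y : lSemiModType S) (h : {linear X -> Y}) : Prop :=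
  (forall y : Y, exists x : X, h x = y) /\ k_normal h.

Definition ses (L M N : lSemiModType S) (f : {linear L -> M}) (g : {linear M -> N}) : Prop :=
  injective f /\
  (forall m : M, g m = 0 <-> exists l : L, f l = m) /\
  (forall n : N, exists m : M, g m = n) /\
  k_normal g.

(* 0 -> Hom(P,L) -(f o -)-> Hom(P,M) -(g o -)-> Hom(P,N) -> 0 is a short
   exact sequence of commutative monoids (written out, with extensional
   equality of linear maps and pointwise monoid operations). *)
Definition hom_ses (P L M N : lSemiModType S) (f : {linear L -> M}) (g : {linear M -> N}) : Prop :=
  (forall h1 h2 : {linear P -> L}, (forall p, f (h1 p) = f (h2 p)) -> forall p, h1 p = h2 p) /\
  (forall h : {linear P -> M},
     (forall p, g (h p) = 0) <-> exists h' : {linear P -> L}, forall p, f (h' p) = h p) /\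
  (forall k : {linear P -> N}, exists h : {linear P -> M}, forall p, g (h p) = k p) /\
  (forall h h' : {linear P -> M}, (forall p, g (h p) = g (h' p)) ->
     exists k k' : {linear P -> M},
       (forall p, g (k p) = 0) /\ (forall p, g (k' p) = 0) /\
       (forall p, h p + k p = h' p + k' p)).

Definition M_e_projective (P M : lSemiModType S) : Prop :=
  forall (L N : lSemiModType S) (f : {linear L -> M}) (g : {linear M -> N}),
    ses f g -> hom_ses P f g.

Definition e_projective (P : lSemiModType S) : Prop :=
  forall M : lSemiModType S, M_e_projective P M.

Definition normally_M_projective (P M : lSemiModType S) : Prop :=
  forall (N : lSemiModType S) (f : {linear M -> N}) (g : {linear P -> N}),
    normal_epi f ->
    exists h : {linear P -> M},
      (forall p, f (h p) = g p) /\
      (forall h' : {linear P -> M}, (forall p, f (h' p) = g p) ->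
         exists h1 h2 : {linear P -> M},
           (forall p, f (h1 p) = 0) /\ (forall p, f (h2 p) = 0) /\
           (forall p, h p + h1 p = h' p + h2 p)).

Definition normally_projective (P : lSemiModType S) : Prop :=
  forall M : lSemiModType S, normally_M_projective P M.

End Defs.

(* Main.v *)
From HB Require Import structures.
Require Import Defs.
From mathcomp Require Import all_boot all_algebra.
From Stdlib Require Import ClassicalEpsilon.
Set Implicit Arguments. Unset Strict Implicit. Unset Printing Implicit Defensive.
Import GRing.Theory.
Local Open Scope ring_scope.

Section Ker.
Variables (S : nzSemiRingType) (M N : lSemiModType S) (f : {linear M -> N}).

Definition kerb (x : M) : bool :=
  if excluded_middle_informative (f x = 0) then true else false.

Lemma kerbP x : kerb x <-> f x = 0.
Proof. by rewrite /kerb; case: excluded_middle_informative. Qed.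

Definition ker_pred := fun x : M => kerb x.
Arguments ker_pred _ /.
Definition ker_q := [qualify a x | ker_pred x].

Fact ker_closed : subsemimod_closed ker_q.
Proof.
split=> [|a x]; first split=> [|x y]; rewrite !qualifE /=.
- by apply/kerbP; rewrite raddf0.
- move=> /kerbP kx /kerbP ky; apply/kerbP. rewrite raddfD; exact: (etrans (f_equal2 _ kx ky) (addr0 _)).
- move=> /kerbP kx; apply/kerbP; rewrite linearZ; exact: (etrans (f_equal _ kx) (scaler0 _ _)).
Qed.

HB.instance Definition _ := GRing.isSubSemiModClosed.Build S M ker_pred ker_closed.

Record kerT : predArgType := KerT { kval :> M; _ : kval \is a ker_q }.
HB.instance Definition _ := [isSub for @kval].
HB.instance Definition _ := [Choice of kerT by <:].
HB.instance Definition _ := [SubChoice_isSubLSemiModule of kerT by <:].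

Definition kinc : {linear kerT -> M} := val.
End Ker.

Section Lift.
Variables (S : nzSemiRingType) (P L M : lSemiModType S) (f : {linear L -> M}).
Variables (finj : injective f) (h : {linear P -> M}) (H : forall p, exists l, f l = h p).

Definition lift (p : P) : L := proj1_sig (constructive_indefinite_description _ (H p)).
Lemma liftK p : f (lift p) = h p.
Proof. exact: (proj2_sig (constructive_indefinite_description _ (H p))). Qed.

Lemma lift_semilinear : semilinear_for *:%R lift.
Proof.
split=> [a x|x y]; apply: finj.
- by rewrite linearZ /= !liftK linearZ.
- by rewrite raddfD /= !liftK raddfD.
Qed.

HB.instance Definition _ := GRing.isSemilinear.Build S P L *:%R lift lift_semilinear.
Definition liftL : {linear P -> L} := lift.
End Lift.

Theorem mainTheorem6 (S : nzSemiRingType) (P : lSemiModType S) :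
  (forall M : lSemiModType S, M_e_projective P M <-> normally_M_projective P M) /\
  (e_projective P <-> normally_projective P).
Proof.
have part1 : forall M : lSemiModType S, M_e_projective P M <-> normally_M_projective P M.
  move=> M; split.
  - move=> He N f g [fsurj fkn].
    have Hses : ses (kinc f) f.
      split; first exact: val_inj.
      split.
        move=> m; split.
          move=> fm0.
          have km : m \is a ker_q f by rewrite qualifE /=; apply/kerbP.
          by exists (KerT km).
        move=> [l <-]; apply/kerbP; exact: (valP l).
      by split.
    have [_ [_ [Hs Hk]]] := He _ _ _ _ Hses.
    have [h Hh] := Hs g.
    exists h; split => // h' Hh'.
    have [k [k' [Ek [Ek' Ekk]]]] := Hk h h' (fun p => etrans (Hh p) (esym (Hh' p))).
    by exists k, k'.
  - move=> Hn L N f g [finj [Hker [gsurj gkn]]].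
    split.
      by move=> h1 h2 E p; apply: finj; exact: E.
    split.
      move=> h; split.
        move=> Hg.
        have H : forall p, exists l, f l = h p := fun p => proj1 (Hker _) (Hg p).
        exists (liftL finj H) => p; exact: liftK.
      by move=> [h' E] p; rewrite -E; apply/Hker; eauto.
    split.
      move=> k; have [h [Hh _]] := Hn N g k (conj gsurj gkn); by exists h.
    move=> h h' E.
    have [h0 [H0 Hu]] := Hn N g (g \o h : {linear P -> N}) (conj gsurj gkn).
    have [h1 [h2 [E1 [E2 e12]]]] := Hu h (fun p => erefl).
    have [h1' [h2' [E1' [E2' e12']]]] := Hu h' (fun p => esym (E p)).
    exists (GRing.add_fun h2 h1' : {linear P -> M}), (GRing.add_fun h2' h1 : {linear P -> M}).
    split; first by move=> p; rewrite /= raddfD; exact: (etrans (f_equal2 _ (E2 p) (E1' p)) (addr0 _)).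
    split; first by move=> p; rewrite /= raddfD; exact: (etrans (f_equal2 _ (E2' p) (E1 p)) (addr0 _)).
    move=> p /=.
    by rewrite addrA -e12 addrAC e12' addrA.
split => //; split.
- by move=> He M; apply/part1.
- by move=> Hn M; apply/part1.
Qed.
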